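(* Let $\mathcal{G}$ be an additive arithmetical semigroup (with the setup below), $S\subseteq\mathcal{P}$, and let $f\colon\mathbb{Z}_{\ge0}\to\mathbb{C}$ satisfy $f(0)=0$. Then for every $g\in\mathcal{G}$, $$\sum_{h\mid g}\mu(h)\,1_{\mathfrak{D}(\mathcal{G},S)}(h)\,f(d_-(h))=-Q_S(g)\,f(d^+(g)).$$
   Context: $\mathcal{G}$ is a commutative monoid (written additively, identity $e_{\mathcal{G}}$) freely generated by a countable set $\mathcal{P}$ of primes, with an additive degree map $\partial\colon\mathcal{G}\to\mathbb{Z}_{\ge0}$, $\partial(e_{\mathcal{G}})=0$, $\partial(P)>0$ for primes. $h\mid g$ means $g=h+r$ for some $r\in\mathcal{G}$. For $g\ne e_{\mathcal{G}}$: $d_-(g)=\min\{\partial(P):P\in\mathcal{P},P\mid g\}$, $d^+(g)=\max\{\partial(P):P\mid g\}$; conventions $d_-(e_{\mathcal{G}})=0$ and $d^+(e_{\mathcal{G}})=0$. $g$ is distinguishable if $g\ne e_{\mathcal{G}}$ and exactly one prime $P_{\min}(g)\mid g$ has degree $d_-(g)$; $\mathfrak{D}(\mathcal{G},S)=\{g\text{ distinguishable}:P_{\min}(g)\in S\}\cup\{e_{\mathcal{G}}\}$, with indicator function $1_{\mathfrak{D}(\mathcal{G},S)}$. $Q_S(g)=\#\{P\in S:P\mid g,\ \partial(P)=d^+(g)\}$. $\mu$ is the Möbius function ($\mu(e_{\mathcal{G}})=1$, $(-1)^k$ on sums of $k$ distinct primes, $0$ if $2P\mid g$ for some prime $P$).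 *)

(* Defs.v *)
From HB Require Import structures.
From mathcomp Require Import all_boot all_order all_algebra.
From mathcomp Require Import finmap multiset.
From mathcomp Require Import reals.
From mathcomp Require Import complex.

Set Implicit Arguments.
Unset Strict Implicit.
Unset Printing Implicit Defensive.

Import GRing.Theory.
Local Open Scope fset_scope.
Local Open Scope mset_scope.

(* The additive arithmetical semigroup G freely generated by the primes P
   (a countable type) is {mset P}: g = sum_P (g P) * P, addition is `+`,
   the identity e_G is mset0. *)
Section Semigroup.
Variable P : countType.
Variable deg : P -> nat.

Definition gdeg (g : {mset P}) : nat := \sum_(p <- g) deg p.

Definition gdvd (h g : {mset P}) : Prop := exists r : {mset P}, g = h `+` r.

Fixpoint divs_seq (s : seq P) : seq {mset P} :=
  if s is x :: s' then divs_seq s' ++ [seq x +` h | h <- divs_seq s'] else [:: mset0].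

Definition gdivisors (g : {mset P}) : seq {mset P} := undup (divs_seq g).

Lemma mem_divs_seq (s : seq P) h : (h \in divs_seq s) = (h `<=` seq_mset s).
Proof.
elim: s h => [|x s IH] h /=.
  rewrite inE; apply/eqP/msubsetP => [-> y|H]; first by rewrite mset0E.
  apply/msetP => y; rewrite mset0E; apply/eqP; rewrite -leqn0; move: (H y); by rewrite mset_seqE.
rewrite mem_cat IH mset_cons; apply/orP/idP => [[H|/mapP[h' Hh' ->]]|H].
- apply: (msubset_trans H); apply/msubsetP => y; rewrite mset1DE; exact: leq_addl.
- by apply: msetDS; rewrite -IH.
case: (posnP (h x)) => xh; last first.
  right; apply/mapP; exists (h `\ x); last by rewrite msetB1K // in_mset.
  rewrite IH; apply/msubsetP => y; move/msubsetP: H => /(_ y).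
  by rewrite msetB1E mset1DE leq_subLR.
left; apply/msubsetP => y; move/msubsetP: H => /(_ y); rewrite mset1DE.
by case: (eqVneq y x) => [->|//]; rewrite xh.
Qed.

Lemma gdvdP (h g : {mset P}) : gdvd h g <-> (h `<=` g).
Proof.
split=> [[r ->]|H]; last by exists (g `\` h); rewrite msetBDKC.
by rewrite -{1}(msetD0 h); apply: msetDS; apply: msub0set.
Qed.

Lemma mem_gdivisors (g h : {mset P}) : h \in gdivisors g <-> gdvd h g.
Proof. by rewrite mem_undup mem_divs_seq seq_mset_id gdvdP. Qed.

Lemma uniq_gdivisors (g : {mset P}) : uniq (gdivisors g).
Proof. exact: undup_uniq. Qed.

(* d_-(g): least degree of a prime dividing g; 0 for e_G *)
Definition dminus (g : {mset P}) : nat :=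
  if enum_mset g is p :: s then foldr (fun q m => minn (deg q) m) (deg p) s else 0.

(* d^+(g): largest degree of a prime dividing g; 0 for e_G *)
Definition dplus (g : {mset P}) : nat := \max_(p <- g) deg p.

Definition nb_min (g : {mset P}) : nat :=
  count (fun p => deg p == dminus g) (finsupp g).

Definition distinguishable (g : {mset P}) : bool := (g != mset0) && (nb_min g == 1%N).

(* membership in D(G,S): e_G, or g distinguishable with P_min(g) in S
   (P_min(g) is the unique prime p | g with deg p = d_-(g)) *)
Definition inD (S : pred P) (g : {mset P}) : bool :=
  (g == mset0) ||
  (distinguishable g && has (fun p => (deg p == dminus g) && (p \in S)) (finsupp g)).

Definition QS (S : pred P) (g : {mset P}) : nat :=
  count (fun p => (p \in S) && (deg p == dplus g)) (finsupp g).

Definition gmu {R : pzRingType} (g : {mset P}) : R :=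
  if all (fun p => g p <= 1)%N (finsupp g) then ((-1) ^+ size (finsupp g))%R else 0%R.

Definition indD {R : pzRingType} (S : pred P) (g : {mset P}) : R := ((inD S g)%:R)%R.

End Semigroup.

(* Main.v *)
Require Import Defs.
From HB Require Import structures.
From mathcomp Require Import all_boot all_order all_algebra.
From mathcomp Require Import finmap multiset.
From mathcomp Require Import reals.
From mathcomp Require Import complex.

Set Implicit Arguments.
Unset Strict Implicit.
Unset Printing Implicit Defensive.
Import GRing.Theory.
Local Open Scope mset_scope.
Local Open Scope ring_scope.

Section Aux.
Variable P : countType.
Variable deg : P -> nat.

Lemma perm_supp (w : seq P) : uniq w -> perm_eq (finsupp (seq_mset w)) w.
Proof.
move=> uw; apply: uniq_perm => //.
by move=> a; rewrite msuppE in_mset mset_seqE -has_pred1 has_count.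
Qed.

Lemma seq_mset_nil : seq_mset ([::] : seq P) = mset0.
Proof. by apply/msetP => a; rewrite mset_seqE mset0E. Qed.

Lemma seq_mset_neq0 (w : seq P) : w != [::] -> seq_mset w != mset0.
Proof.
case: w => [//|y w] _; apply/eqP => /msetP /(_ y).
by rewrite mset_seqE mset0E /= eqxx.
Qed.

Lemma gmu_seq (R : pzRingType) (w : seq P) : uniq w -> gmu (seq_mset w) = (-1) ^+ size w :> R.
Proof.
move=> uw; rewrite /gmu (perm_all _ (perm_supp uw)) (perm_size (perm_supp uw)).
suff -> : all (fun p => (seq_mset w p <= 1)%N) w by [].
by apply/allP => p _; rewrite mset_seqE count_uniq_mem // leq_b1.
Qed.

Lemma foldr_min (p : P) s :
  let v := foldr (fun q m => minn (deg q) m) (deg p) s in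
  (v \in map deg (p :: s)) && all (fun q => (v <= deg q)%N) (p :: s).
Proof.
elim: s => [|q s IH] /=; first by rewrite mem_head leqnn.
move: IH => /andP [] /=.
move: (foldr _ _ s) => v Hin /andP [Hp Hall].
rewrite !inE; apply/andP; split.
  rewrite /minn; case: ifP => H; first by rewrite eqxx orbT.
  move: Hin; rewrite inE => /orP [->//|Hin].
  by rewrite Hin !orbT.
rewrite (leq_trans (geq_minr _ _) Hp) geq_minl /=.
by apply/allP => r Hr; rewrite (leq_trans (geq_minr _ _)) //; move/allP: Hall; apply.
Qed.

Lemma dminus_seq (w : seq P) : w != [::] ->
  (dminus deg (seq_mset w) \in map deg w) /\
  (forall q, q \in w -> (dminus deg (seq_mset w) <= deg q)%N).
Proof.
move=> wn; rewrite /dminus.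
have pe := perm_eq_seq_mset w.
case E: (enum_mset (seq_mset w)) => [|p s].
  by move: (perm_size pe) wn; rewrite E /=; case: (w).
move: (foldr_min p s) => /andP [Hin Hall].
rewrite E in pe.
split.
  move/mapP: Hin => [r Hr ->]; apply: map_f; by rewrite -(perm_mem pe).
by move=> q Hq; move/allP: Hall; apply; rewrite (perm_mem pe).
Qed.

Lemma dminus_eq (w : seq P) v : v \in map deg w -> (forall q, q \in w -> (v <= deg q)%N) ->
  dminus deg (seq_mset w) = v.
Proof.
move=> Hv Hall.
have wn : w != [::] by move: Hv; case: (w).
have [H1 H2] := dminus_seq wn.
apply/eqP; rewrite eqn_leq; apply/andP; split.
  by move/mapP: Hv => [q Hq ->]; apply: H2.
by move/mapP: H1 => [q Hq ->]; apply: Hall.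
Qed.

Lemma inD_seq S (w : seq P) : uniq w -> w != [::] ->
  inD deg S (seq_mset w) =
  (count (fun p => deg p == dminus deg (seq_mset w)) w == 1)%N &&
  has (fun p => (deg p == dminus deg (seq_mset w)) && (p \in S)) w.
Proof.
move=> uw wn; rewrite /inD /distinguishable /nb_min (negbTE (seq_mset_neq0 wn)) /=.
by rewrite (permP (perm_supp uw)) (perm_has _ (perm_supp uw)).
Qed.


Variable R : realType.
Variable S : pred P.
Variable f : nat -> R[i].

Definition FF (h : {mset P}) : R[i] := gmu h * indD deg S h * f (dminus deg h).

Lemma F_cons (x : P) w : uniq (x :: w) -> w != [::] ->
  (forall q, q \in w -> (deg q <= deg x)%N) ->
  FF (seq_mset (x :: w)) = if (dminus deg (seq_mset w) < deg x)%N then - FF (seq_mset w) else 0.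
Proof.
move=> uxw wn Hx.
have uw : uniq w by case/andP: uxw.
have [Hm1 Hm2] := dminus_seq wn.
set m := dminus deg (seq_mset w) in Hm1 Hm2 *.
have mx : (m <= deg x)%N by move/mapP: Hm1 => [q Hq ->]; apply: Hx.
have dmx : dminus deg (seq_mset (x :: w)) = m.
  apply: dminus_eq; first by rewrite map_cons inE Hm1 orbT.
  by move=> q; rewrite inE => /orP [/eqP -> //|]; apply: Hm2.
rewrite /FF dmx !gmu_seq // /indD !inD_seq // dmx -/m /=.
case: ltnP => H.
  have -> : (deg x == m) = false by rewrite eq_sym ltn_eqF.
  by rewrite add0n /= exprS mulN1r !mulNr.
have -> : (deg x == m) by rewrite eqn_leq H mx.
have : (0 < count (fun p => deg p == m) w)%N.
  by rewrite -has_count; move/mapP: Hm1 => [q Hq ->]; apply/hasP; exists q.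
by case: (count _ w) => [//|c] _ /=; rewrite ?mulr0n mulr0 mul0r.
Qed.

Lemma F_single y : FF (seq_mset [:: y]) = - (y \in S)%:R * f (deg y).
Proof.
have dm : dminus deg (seq_mset [:: y]) = deg y.
  by apply: dminus_eq; [rewrite mem_head | move=> q; rewrite inE => /eqP ->].
by rewrite /FF gmu_seq // /indD inD_seq // dm /= eqxx /= expr1 mulN1r orbF.
Qed.

Lemma F_size1 x w : uniq w -> w != [::] ->
  (forall q, q \in w -> (deg q <= deg x)%N) ->
  ~~ (dminus deg (seq_mset w) < deg x)%N -> FF (seq_mset w) != 0 -> size w = 1%N.
Proof.
move=> uw wn Hx; rewrite -leqNgt => H.
have [Hm1 Hm2] := dminus_seq wn.
set m := dminus deg (seq_mset w) in Hm1 Hm2 H *.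
have Hc : count (fun p => deg p == m) w = size w.
  rewrite -count_predT; apply: eq_in_count => q Hq /=.
  by rewrite eqn_leq (leq_trans (Hx q Hq) H) Hm2.
rewrite /FF /indD inD_seq // -/m Hc => HF.
apply/eqP; apply: contraNT HF => Hs.
by rewrite (negbTE Hs) /= mulr0 mul0r.
Qed.


Lemma uniq_divs (s : seq P) : uniq s -> uniq (divs_seq s).
Proof.
elim: s => [//|x s IH] /= /andP [xs us].
rewrite cat_uniq IH //=; apply/andP; split.
  apply/hasPn => _ /mapP [h _ ->]; rewrite mem_divs_seq; apply/negP => /msubsetP /(_ x).
  by rewrite mset1DE eqxx mset_seqE (count_memPn xs).
have inj : injective (fun h => x +` h).
  by move=> a b /(congr1 (fun h => h `\ x)); rewrite !msetD1K.
by rewrite (map_inj_uniq inj) IH.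
Qed.

Lemma divs_sq (s : seq P) h : uniq s -> h \in divs_seq s ->
  exists w, [/\ uniq w, {subset w <= s} & h = seq_mset w].
Proof.
move=> us; rewrite mem_divs_seq => /msubsetP Hle.
exists (enum_mset h); split; last by rewrite seq_mset_id.
- apply: count_mem_uniq => a; rewrite count_mem_mset.
  move: (Hle a); rewrite mset_seqE count_uniq_mem //.
  have -> : (a \in enum_mset h) = (0 < h a)%N by rewrite -in_mset.
  by case: (h a) => [|[|]] //; case: (a \in s).
- move=> a; rewrite (_ : (a \in enum_mset h) = (0 < h a)%N); last by rewrite -in_mset.
  move=> /leq_trans /(_ (Hle a)); rewrite mset_seqE -has_pred1 -has_count.
  by [].
Qed.

Lemma big_support (T : eqType) (s1 s2 : seq T) (F : T -> R[i]) :
  uniq s1 -> uniq s2 -> {subset s2 <= s1} ->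
  (forall x, x \in s1 -> x \notin s2 -> F x = 0) ->
  \sum_(x <- s1) F x = \sum_(x <- s2) F x.
Proof.
move=> u1 u2 Hsub Hz.
rewrite (bigID (fun x => x \in s2)) /= [X in _ + X]big1_seq ?addr0; last first.
  by move=> x /andP [Hn Hx]; apply: Hz.
rewrite -big_filter; apply: perm_big; apply: uniq_perm; first exact: filter_uniq.
  done.
move=> x; rewrite mem_filter; apply/andP/idP => [[]//|H]; split => //; exact: Hsub.
Qed.

Lemma sum_gdiv_divs (g : {mset P}) (u : seq P) : uniq u -> perm_eq u (finsupp g) ->
  \sum_(h <- gdivisors g) FF h = \sum_(h <- divs_seq u) FF h.
Proof.
move=> uu pu.
have Hug : seq_mset u `<=` g.
  apply/msubsetP => a; rewrite mset_seqE count_uniq_mem //.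
  case Ha: (a \in u) => //=; move: Ha; rewrite (perm_mem pu) msuppE in_mset; done.
apply: big_support.
- exact: uniq_gdivisors.
- exact: uniq_divs.
- move=> h; rewrite mem_divs_seq => Hh; apply/mem_gdivisors/gdvdP.
  by apply: (@msubset_trans _ (seq_mset u)).
move=> h /mem_gdivisors /gdvdP Hhg Hn.
rewrite /FF /gmu; case: ifP => Hall; last by rewrite !mul0r.
exfalso; move/negP: Hn; apply; rewrite mem_divs_seq; apply/msubsetP => a.
move/msubsetP: Hhg => /(_ a) Hga.
rewrite mset_seqE count_uniq_mem //.
case: (posnP (h a)) => [->//| hpos].
have : a \in finsupp h by rewrite msuppE in_mset.
move/allP: Hall => Hall /Hall /= h1.
have -> : a \in u by rewrite (perm_mem pu) msuppE in_mset (leq_trans hpos Hga).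
done.
Qed.

Lemma exists_max (s : seq P) : s != [::] ->
  exists2 x, x \in s & forall q, q \in s -> (deg q <= deg x)%N.
Proof.
elim: s => [//|y s IH] _.
case: s IH => [|z s] IH.
  by exists y; rewrite ?mem_head // => q; rewrite inE => /eqP ->.
have [x xs Hx] := IH isT.
case: (leqP (deg y) (deg x)) => H.
  exists x; first by rewrite inE xs orbT.
  by move=> q; rewrite inE => /orP [/eqP ->//|]; apply: Hx.
exists y; first exact: mem_head.
move=> q; rewrite inE => /orP [/eqP ->//|/Hx Hq].
by rewrite (leq_trans Hq) // ltnW.
Qed.

Lemma mset1_seq (x : P) : x +` mset0 = seq_mset [:: x].
Proof. by apply/msetP => a; rewrite mset1DE mset0E mset_seqE /= [a == x]eq_sym. Qed.
Lemma mset1D_seq (x : P) w : x +` seq_mset w = seq_mset (x :: w).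
Proof. by apply/msetP => a; rewrite mset1DE !mset_seqE /= eq_sym. Qed.

Lemma sum_count (t : seq P) (b : pred P) (c : R[i]) :
  \sum_(y <- t) - (b y)%:R * c = - (count b t)%:R * c.
Proof.
elim: t => [|y t IH]; first by rewrite big_nil /= oppr0 mul0r.
by rewrite big_cons IH /= natrD opprD mulrDl.
Qed.


Lemma F0 : f 0%N = 0 -> FF mset0 = 0.
Proof. by move=> f0; rewrite /FF /dminus enum_mset0 f0 mulr0. Qed.

Lemma main_aux (f0 : f 0%N = 0) (g : {mset P}) :
  \sum_(h <- gdivisors g) FF h = - (QS deg S g)%:R * f (dplus deg g).
Proof.
case Esupp: (finsupp g : seq P) => [|y ys].
  rewrite (@sum_gdiv_divs g [::]) //; last by rewrite Esupp.
  by rewrite /= big_seq1 F0 // /QS Esupp /= oppr0 mul0r.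
have sn : (finsupp g : seq P) != [::] by rewrite Esupp.
have [x xs Hmax] := exists_max sn.
set t := rem x (finsupp g).
have pe : perm_eq (finsupp g) (x :: t) := perm_to_rem xs.
have uxt : uniq (x :: t) by rewrite -(perm_uniq pe); case: (finsupp g).
have ut : uniq t by case/andP: uxt.
have xt : x \notin t by case/andP: uxt.
have Ht : forall q, q \in t -> (deg q <= deg x)%N.
  by move=> q qt; apply: Hmax; rewrite (perm_mem pe) inE qt orbT.
rewrite (@sum_gdiv_divs g (x :: t)) //; last by rewrite perm_sym.
have dp : dplus deg g = deg x.
  rewrite /dplus; apply/eqP; rewrite eqn_leq; apply/andP; split.
    by apply/bigmax_leqP_seq => q Hq _; apply: Hmax; rewrite msuppE.
  by apply: (leq_bigmax_seq x) => //; rewrite -msuppE.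
rewrite /QS dp (permP pe).
have H0 : mset0 \in divs_seq t by rewrite mem_divs_seq msub0set.
have udt := uniq_divs ut.
rewrite /= big_cat big_map /=.
rewrite (bigD1_seq mset0 H0 udt) [X in _ + X](bigD1_seq mset0 H0 udt) /=.
rewrite F0 // add0r mset1_seq F_single.
set E := fun h => if (dminus deg h < deg x)%N then 0 else FF h.
rewrite [X in _ + (_ + X)](_ : _ = \sum_(h <- divs_seq t | h != mset0) (- FF h + E h)); last first.
  rewrite big_seq_cond [RHS]big_seq_cond; apply: eq_bigr => h /andP [hd hn].
  have [w [uw ws hw]] := divs_sq ut hd.
  have wn : w != [::] by apply: contraNneq hn => wn; rewrite hw wn seq_mset_nil.
  have xw : x \notin w by apply: contra xt; apply: ws.
  rewrite hw mset1D_seq F_cons //; last by move=> q /ws; apply: Ht.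
    by rewrite /E; case: ifP => _; rewrite ?addr0 ?addNr.
  by rewrite /= xw.
rewrite big_split /= sumrN addrCA addNKr.
rewrite big_mkcond /=.
rewrite (@big_support _ _ [seq seq_mset [:: y] | y <- t]) //; first last.
- move=> h hd hn; case: (boolP (h != mset0)) => // hn0.
  have [w [uw ws hw]] := divs_sq ut hd.
  have wn : w != [::] by apply: contraNneq hn0 => wn; rewrite hw wn seq_mset_nil.
  rewrite /E; case: ifP => // Hlt.
  apply/eqP; apply: contraNT hn => HF.
  rewrite hw in HF Hlt.
  have := F_size1 uw wn (fun q qw => Ht q (ws q qw)) (negbT Hlt) HF.
  case: w {uw wn HF Hlt} ws hw => [|z [|]] //= ws hw _.
  by apply/mapP; exists z => //; apply: ws; rewrite mem_head.
- move=> h /mapP [z zt ->]; rewrite mem_divs_seq; apply/msubsetP => a.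
  rewrite !mset_seqE /= addn0; case: eqP => //= <-.
  by rewrite count_uniq_mem // zt.
- have inj : injective (fun y : P => seq_mset [:: y]).
    move=> a b /eq_seq_msetP /perm_mem /(_ a).
    by rewrite !inE eqxx => /esym /eqP.
  by rewrite (map_inj_uniq inj).
rewrite big_map.
rewrite (@eq_big_seq _ _ _ _ _ _ (fun z => - ((z \in S) && (deg z == deg x))%:R * f (deg x))); last first.
  move=> z zt.
  have dm : dminus deg (seq_mset [:: z]) = deg z.
    by apply: dminus_eq; [rewrite mem_head | move=> q; rewrite inE => /eqP ->].
  rewrite seq_mset_neq0 // /E dm F_single.
  case: ltnP => H.
    by rewrite (ltn_eqF H) andbF oppr0 mul0r.
  have -> : deg z = deg x by apply/eqP; rewrite eqn_leq H Ht.
  by rewrite eqxx andbT.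
rewrite sum_count /= eqxx andbT natrD opprD mulrDl.
done.
Qed.

End Aux.

Theorem lemma2p2 (R : realType) (P : countType) (deg : P -> nat)
  (deg_pos : forall p : P, (0 < deg p)%N)
  (S : pred P) (f : nat -> R[i]) (f0 : f 0%N = 0) (g : {mset P}) :
  \sum_(h <- gdivisors g) gmu h * indD deg S h * f (dminus deg h)
  = - (QS deg S g)%:R * f (dplus deg g).
Proof. exact: (main_aux deg S f0 g). Qed.
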